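(* In the setting of the context: (a) If $\Pi^\rho_1 \ne \emptyset$, then the market admits $\rho$-arbitrage if and only if $\rho_1 \le 0$. (b) If $\Pi^\rho_1 = \emptyset$ and $\Pi^\rho_0 \ne \emptyset$, then the market admits $\rho$-arbitrage if and only if $\rho_1 < 0$. (c) If $\Pi^\rho_1 = \emptyset$ and $\Pi^\rho_0 = \emptyset$, then the market admits $\rho$-arbitrage.
   Context: Let $(\Omega,\mathcal{F},\mathbb{P})$ be a probability space. The market consists of a riskless asset with $S^0_0 = 1$, $S^0_1 = 1+r$, $r > -1$, and $d$ risky assets $S^1,\dots,S^d$ with constants $S^i_0 > 0$ and real-valued $\mathcal{F}$-measurable $S^i_1$. Returns: $R^i := (S^i_1 - S^i_0)/S^i_0$, $R=(R^1,\dots,R^d)$. Standing assumptions: nonredundancy (if $\theta\in\mathbb{R}^{1+d}$ and $\sum_{i=0}^d\theta^iS^i_t=0$ a.s. for $t\in\{0,1\}$ then $\theta=0$); $R^i\in L^1(\mathbb{P})$, $\mu^i:=\mathbb{E}[R^i]$; $\mu^i\neq r$ for some $i$. Portfolio $\pi\in\mathbb{R}^d$ has excess return $X_\pi:=\pi\cdot(R-r\mathbf{1})$; $\Pi_\nu := \{\pi : \mathbb{E}[X_\pi]=\nu\}$. $L$ is a Riesz space with $L^\infty\subset L\subset L^1$ containing all $X_\pi$, and $\rho:L\to(-\infty,\infty]$ is monotone, cash-invariant and positively homogeneous. $\rho_\nu:=\inf\{\rho(X_\pi):\pi\in\Pi_\nu\}\in[-\infty,\infty]$; $\Pi^\rho_\nu$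 is the set of $\pi\in\Pi_\nu$ with $\rho(X_\pi)<\infty$ and $\rho(X_\pi)\le\rho(X_{\pi'})$ for all $\pi'\in\Pi_\nu$. A portfolio $\pi$ is strictly $\rho$-preferred over $\pi'$ if $\mathbb{E}[X_\pi]\ge\mathbb{E}[X_{\pi'}]$ and $\rho(X_\pi)\le\rho(X_{\pi'})$ with at least one inequality strict. A portfolio $\pi$ is $\rho$-efficient if $\mathbb{E}[X_\pi]\ge0$ and no portfolio is strictly $\rho$-preferred over $\pi$. The market admits $\rho$-arbitrage if there are no $\rho$-efficient portfolios. *)

(* Defs.v *)
From HB Require Import structures.
From mathcomp Require Import all_boot all_order all_algebra.
From mathcomp Require Import all_classical all_reals all_analysis.
Set Implicit Arguments. Unset Strict Implicit. Unset Printing Implicit Defensive.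
Import Order.TTheory GRing.Theory Num.Theory.
Local Open Scope classical_set_scope.
Local Open Scope ring_scope.

Section OnePeriodMarket.
Context {R : realType} {d0 : measure_display} {T : measurableType d0}.
Variable (P : probability T R).
(* d risky assets; riskless rate r; S0 i = S^i_0 (constants), S1 i = S^i_1 *)
Variables (d : nat) (r : R) (S0 : 'I_d -> R) (S1 : 'I_d -> T -> R).

Definition ret (i : 'I_d) : T -> R := fun w => (S1 i w - S0 i) / S0 i.

Definition excess (pi : 'I_d -> R) : T -> R :=
  fun w => \sum_(i < d) pi i * (ret i w - r).

Definition expect (X : T -> R) : \bar R := (\int[P]_w (X w)%:E)%E.

Definition market_assumptions : Prop :=
  [/\ -1 < r /\ (forall i, 0 < S0 i),
      (forall i, measurable_fun setT (S1 i)),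
      (* nonredundancy, with S^0_0 = 1, S^0_1 = 1 + r *)
      (forall (th0 : R) (th : 'I_d -> R),
          th0 * 1 + \sum_(i < d) th i * S0 i = 0 ->
          {ae P, forall w, th0 * (1 + r) + \sum_(i < d) th i * S1 i w = 0} ->
          (th0 = 0 /\ (forall i, th i = 0))),
      (forall i, P.-integrable setT (fun w => (ret i w)%:E)) &
      (exists i, expect (ret i) != r%:E)].

Definition admissible_space (L : set (T -> R)) : Prop :=
  [/\ (forall f g, L f -> L g -> L (fun w => f w + g w)) /\
      (forall (a : R) f, L f -> L (fun w => a * f w)),
      (forall f g, L f -> L g -> L (fun w => Num.max (f w) (g w))),
      (forall f : T -> R, measurable_fun setT f ->
          (exists M : R, {ae P, forall w, `|f w| <= M}) -> L f),
      (forall f, L f -> P.-integrable setT (fun w => (f w)%:E)) &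
      (forall pi, L (excess pi))].

Definition risk_functional (L : set (T -> R)) (rho : (T -> R) -> \bar R) : Prop :=
  [/\ (forall X, L X -> rho X != -oo%E),
      (forall X Y, L X -> L Y -> {ae P, forall w, X w <= Y w} ->
          (rho Y <= rho X)%E),
      (forall X (c : R), L X -> rho (fun w => X w + c) = (rho X - c%:E)%E) &
      (forall X (lam : R), L X -> 0 < lam ->
          rho (fun w => lam * X w) = (lam%:E * rho X)%E)].

Variable rho : (T -> R) -> \bar R.

Definition Pi (nu : R) : set ('I_d -> R) := [set pi | expect (excess pi) = nu%:E].

Definition rho_opt (nu : R) : \bar R :=
  ereal_inf [set rho (excess pi) | pi in Pi nu].

Definition Pi_rho (nu : R) : set ('I_d -> R) :=
  [set pi | Pi nu pi /\ (rho (excess pi) < +oo)%E /\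
            forall pi', Pi nu pi' -> (rho (excess pi) <= rho (excess pi'))%E].

Definition strictly_preferred (pi pi' : 'I_d -> R) : Prop :=
  [/\ (expect (excess pi') <= expect (excess pi))%E,
      (rho (excess pi) <= rho (excess pi'))%E &
      ((expect (excess pi') < expect (excess pi))%E \/
       (rho (excess pi) < rho (excess pi'))%E)].

Definition rho_efficient (pi : 'I_d -> R) : Prop :=
  (0 <= expect (excess pi))%E /\ ~ exists pi', strictly_preferred pi' pi.

Definition rho_arbitrage : Prop := ~ exists pi, rho_efficient pi.

End OnePeriodMarket.

(* Main.v *)
Require Import Defs.
From HB Require Import structures.
From mathcomp Require Import all_boot all_order all_algebra.
From mathcomp Require Import all_classical all_reals all_analysis.
From mathcomp Require Import lra.
Import Order.TTheory GRing.Theory Num.Theory.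
Local Open Scope classical_set_scope.
Local Open Scope ring_scope.

Lemma e_twice_le (R : realType) (x : \bar R) :
  x != -oo%E -> (x <= 0)%E -> (2%:E * x <= x)%E.
Proof.
case: x => [x| |] //= _; rewrite ?lee_fin -?EFinM ?lee_fin; lra.
Qed.

Lemma e_twice_lt (R : realType) (x : \bar R) :
  x != -oo%E -> (x < 0)%E -> (2%:E * x < x)%E.
Proof.
case: x => [x| |] //= _; rewrite ?lte_fin -?EFinM ?lte_fin; lra.
Qed.

Lemma e_twice_y (R : realType) : (2%:E * +oo = +oo :> \bar R)%E.
Proof. by rewrite mulry gtr0_sg // mul1e. Qed.

Lemma e_pos_le0 (R : realType) (c : R) (x : \bar R) :
  0 < c -> (x <= 0)%E -> (c%:E * x <= 0)%E.
Proof.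
move=> c0; case: x => [x| |] //=.
- rewrite -EFinM !lee_fin => h; nra.
- by rewrite mulrNy gtr0_sg // mul1e.
Qed.

Theorem theorem3p20 (R : realType) (d0 : measure_display) (T : measurableType d0)
  (P : probability T R) (d : nat) (r : R) (S0 : 'I_d -> R) (S1 : 'I_d -> T -> R)
  (L : set (T -> R)) (rho : (T -> R) -> \bar R) :
  market_assumptions P r S0 S1 ->
  admissible_space P r S0 S1 L ->
  risk_functional P L rho ->
  [/\ (Pi_rho P r S0 S1 rho 1 !=set0 ->
         (rho_arbitrage P r S0 S1 rho <-> (rho_opt P r S0 S1 rho 1 <= 0)%E)),
      (Pi_rho P r S0 S1 rho 1 = set0 -> Pi_rho P r S0 S1 rho 0 !=set0 ->
         (rho_arbitrage P r S0 S1 rho <-> (rho_opt P r S0 S1 rho 1 < 0)%E)) &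
      (Pi_rho P r S0 S1 rho 1 = set0 -> Pi_rho P r S0 S1 rho 0 = set0 ->
         rho_arbitrage P r S0 S1 rho)].
Proof.
move=> [_ _ _ Hint [i0 Hi0]] [_ _ Hbdd HLint HexcL] [Hnoo _ Hcash Hhom].
pose E pi := expect P (excess r S0 S1 pi).
pose Rh pi := rho (excess r S0 S1 pi).
pose sc (c : R) (pi : 'I_d -> R) := fun i => c * pi i.
have exsc : forall c pi, excess r S0 S1 (sc c pi) = fun w => c * excess r S0 S1 pi w.
  move=> c pi; apply: funext => w; rewrite /excess mulr_sumr.
  by apply: eq_bigr => i _; rewrite /sc mulrA.
have HEsc : forall c pi, E (sc c pi) = (c%:E * E pi)%E.
  move=> c pi; rewrite /E /expect exsc /=.
  under eq_integral => w _ do rewrite EFinM.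
  by rewrite integralZl //; apply: HLint.
have HRsc : forall c pi, 0 < c -> Rh (sc c pi) = (c%:E * Rh pi)%E.
  by move=> c pi c0; rewrite /Rh exsc Hhom.
have Hfin : forall pi, exists e : R, E pi = e%:E.
  move=> pi; exists (fine (E pi)); rewrite fineK //.
  exact: integrable_fin_num (HLint _ (HexcL pi)).
have HRn : forall pi, Rh pi != -oo%E by move=> pi; exact: Hnoo.
have Hq : exists q, E q = 1%:E.
  pose q := fun j : 'I_d => ((j == i0)%:R : R).
  have exq : excess r S0 S1 q = fun w => ret S0 S1 i0 w - r.
    apply: funext => w; rewrite /excess (bigD1 i0) //= big1 ?addr0.
      by rewrite /q eqxx mul1r.
    by move=> j /negPf hj; rewrite /q hj mul0r.
  have [a Ha] : exists a : R, expect P (ret S0 S1 i0) = a%:E.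
    exists (fine (expect P (ret S0 S1 i0))); rewrite fineK //.
    exact: integrable_fin_num (Hint i0).
  have Lc : L (fun _ => r).
    apply: Hbdd; first exact: measurable_cst.
    by exists `|r|; apply: aeW => w.
  have Eq : E q = (a - r)%:E.
    rewrite /E /expect exq EFinB.
    rewrite (integralB_EFin (f1 := ret S0 S1 i0) (f2 := fun _ => r)) //;
      last 2 first.
    - exact: Hint.
    - exact: HLint.
    rewrite -/(expect P (ret S0 S1 i0)) Ha.
    have -> : (\int[P]_(x in setT) (EFin \o (fun _ : T => r)) x)%E = r%:E.
      by rewrite integral_cst // -[RHS]mule1; congr (_ * _)%E; apply: probability_setT.
    by [].
  have ar : a - r != 0.
    apply/eqP => h; move/eqP: Hi0; apply; rewrite Ha; congr EFin; lra.
  exists (sc (a - r)^-1 q); rewrite HEsc Eq -EFinM; congr EFin.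
  by rewrite mulVf.
rewrite /E /Rh in HEsc HRsc Hfin Hq HRn.
have Hreal : forall pi, (rho (excess r S0 S1 pi) < +oo)%E ->
    exists y : R, rho (excess r S0 S1 pi) = y%:E.
  move=> pi; move: (HRn pi); case: (rho _) => [y| |] //= _ _; by exists y.
have Hattain : forall nu pi, Pi_rho P r S0 S1 rho nu pi ->
    rho_opt P r S0 S1 rho nu = rho (excess r S0 S1 pi).
  move=> nu pi [Hp [_ Hmin]]; apply/eqP; rewrite eq_le; apply/andP; split.
  - by apply: ge_ereal_inf; exists (rho (excess r S0 S1 pi)) => //; exists pi.
  - by apply/ereal_infP => _ [p Hp' <-]; exact: Hmin.
have LemA : forall q, expect P (excess r S0 S1 q) = 1%:E ->
    (rho (excess r S0 S1 q) <= 0)%E -> rho_arbitrage P r S0 S1 rho.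
  move=> q Eq Rq [pi [E0 Hnp]]; apply: Hnp.
  have [nu Enu] := Hfin pi.
  move: E0; rewrite Enu lee_fin => nu0.
  have HRpi := HRn pi.
  case: (ltrP 0 nu) => [nupos|nule0].
  - case: (leP (rho (excess r S0 S1 pi)) 0%E) => hR.
    + exists (sc 2 pi); split.
      * rewrite HEsc Enu -EFinM lee_fin; nra.
      * by rewrite HRsc //; exact: e_twice_le.
      * left; rewrite HEsc Enu -EFinM lte_fin; nra.
    + have n2 : 0 < 2 * nu by nra.
      exists (sc (2 * nu) q); split.
      * rewrite HEsc Eq Enu -EFinM lee_fin; nra.
      * rewrite HRsc //; apply: le_trans (ltW hR); exact: e_pos_le0.
      * left; rewrite HEsc Eq Enu -EFinM lte_fin; nra.
  - have nu00 : nu = 0 by lra.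
    subst nu.
    case: (ltP (rho (excess r S0 S1 pi)) 0%E) => hR.
    + exists (sc 2 pi); split.
      * by rewrite HEsc Enu -EFinM mulr0.
      * by rewrite HRsc //; exact/ltW/e_twice_lt.
      * by right; rewrite HRsc //; exact: e_twice_lt.
    + exists q; split.
      * by rewrite Eq Enu lee_fin.
      * exact: le_trans Rq hR.
      * by left; rewrite Eq Enu lte_fin.
split.
-
  move=> [p1 Hp1]; rewrite (Hattain 1 p1 Hp1).
  move: Hp1 => [Ep1 [Rlt Hmin]].
  have Ep1' : expect P (excess r S0 S1 p1) = 1%:E := Ep1.
  have [x0 Hx0] := Hreal p1 Rlt.
  rewrite Hx0 lee_fin; split.
  + move=> Harb; rewrite leNgt; apply/negP => x0pos; apply: Harb.
    exists p1; split; first by rewrite Ep1' lee_fin.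
    move=> [p' [Hle Hrle Hstr]].
    have [nu Enu] := Hfin p'.
    rewrite Ep1' Enu lee_fin in Hle.
    have nupos : 0 < nu by lra.
    have Eq : expect P (excess r S0 S1 (sc nu^-1 p')) = 1%:E.
      by rewrite HEsc Enu -EFinM mulVf // gt_eqF.
    have := Hmin _ Eq; rewrite HRsc ?invr_gt0 // Hx0.
    rewrite Hx0 in Hrle.
    have [y Hy] := Hreal p' (le_lt_trans Hrle (ltry _)).
    rewrite Hy -EFinM lee_fin => h1.
    move: Hrle; rewrite Hy lee_fin => h2.
    move: Hstr; rewrite Ep1' Enu Hy Hx0 !lte_fin => h3.
    have h4 : nu * (nu^-1 * y) = y by rewrite mulrA mulfV ?gt_eqF // mul1r.
    have h5 : nu * x0 <= nu * (nu^-1 * y) by rewrite ler_pM2l.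
    have : (0:R) < 0 by case: h3 => h3; nra.
    by rewrite ltxx.
  + move=> x0le; apply: (LemA p1) => //; by rewrite Hx0 lee_fin.
-
  move=> H1 [p0 [Ep0 [Rlt Hmin]]].
  have Ep0' : expect P (excess r S0 S1 p0) = 0%:E := Ep0.
  have [x0 Hx0] := Hreal p0 Rlt.
  have Hx00 : x0 = 0.
    have E2 : expect P (excess r S0 S1 (sc 2 p0)) = 0%:E.
      by rewrite HEsc Ep0' -EFinM mulr0.
    have Eh : expect P (excess r S0 S1 (sc 2^-1 p0)) = 0%:E.
      by rewrite HEsc Ep0' -EFinM mulr0.
    have := Hmin _ E2; have := Hmin _ Eh.
    rewrite !HRsc ?invr_gt0 // Hx0 -!EFinM !lee_fin => h1 h2.
    have : x0 <= x0 / 2 by rewrite mulrC.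
    lra.
  rewrite Hx00 in Hx0.
  split.
  + move=> Harb; rewrite ltNge; apply/negP => Hge; apply: Harb.
    exists p0; split; first by rewrite Ep0'.
    move=> [p' [Hle Hrle Hstr]].
    have [nu Enu] := Hfin p'.
    rewrite Ep0' Enu lee_fin in Hle.
    rewrite Hx0 in Hrle.
    case: (ltrP 0 nu) => [nupos|nule0].
    * have Eq : expect P (excess r S0 S1 (sc nu^-1 p')) = 1%:E.
        by rewrite HEsc Enu -EFinM mulVf // gt_eqF.
      have Rq : (rho (excess r S0 S1 (sc nu^-1 p')) <= 0%E)%O.
        by rewrite HRsc ?invr_gt0 //; apply: e_pos_le0; rewrite ?invr_gt0.
      have : Pi_rho P r S0 S1 rho 1 (sc nu^-1 p').
        split; first exact: Eq.
        split; first exact: le_lt_trans Rq (ltry _).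
        move=> p'' Hp''; apply: (le_trans Rq); apply: (le_trans Hge).
        by apply: ge_ereal_inf; exists (rho (excess r S0 S1 p'')) => //; exists p''.
      by rewrite H1.
    * have nu00 : nu = 0 by lra.
      subst nu.
      have := Hmin _ Enu; rewrite Hx0 => h.
      move: Hstr; rewrite Ep0' Enu Hx0 ltxx => -[//|h'].
      by move: (lt_le_trans h' h); rewrite ltxx.
  + by move=> /ereal_inf_lt [_ [q Eq <-] Rq]; exact: (LemA q Eq (ltW Rq)).
-
  move=> H1 H0 [pi [E0 Hnp]].
  have [nu Enu] := Hfin pi.
  move: E0; rewrite Enu lee_fin => nu0.
  have [hR|hR] := ltP (rho (excess r S0 S1 pi)) +oo%E; last first.
    have hy : rho (excess r S0 S1 pi) = +oo%E.
      by apply/eqP; rewrite eq_le hR leey.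
    case: (ltrP 0 nu) => [nupos|nule0].
    + apply: Hnp; exists (sc 2 pi); split.
      * rewrite HEsc Enu -EFinM lee_fin; nra.
      * by rewrite hy leey.
      * left; rewrite HEsc Enu -EFinM lte_fin; nra.
    + have [q Eq] := Hq.
      apply: Hnp; exists q; split.
      * rewrite Eq Enu lee_fin; lra.
      * by rewrite hy leey.
      * left; rewrite Eq Enu lte_fin; lra.
  have [y Hy] := Hreal pi hR.
  case: (ltrP 0 nu) => [nupos|nule0].
  + have : Pi_rho P r S0 S1 rho 1 (sc nu^-1 pi).
      split.
        by rewrite /Pi /= HEsc Enu -EFinM mulVf // gt_eqF.
      split.
        by rewrite HRsc ?invr_gt0 // Hy -EFinM ltry.
      move=> p'' Hp''.
      have Ep'' : expect P (excess r S0 S1 p'') = 1%:E := Hp''.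
      rewrite leNgt; apply/negP => hlt.
      apply: Hnp; exists (sc nu p''); split.
      * by rewrite HEsc Ep'' Enu -EFinM mulr1.
      * rewrite HRsc // Hy.
        move: hlt; rewrite HRsc ?invr_gt0 // Hy -EFinM => hlt.
        have [z Hz] := Hreal p'' (lt_trans hlt (ltry _)).
        move: hlt; rewrite Hz -EFinM !lte_fin lee_fin => hlt.
        have h4 : nu * (nu^-1 * y) = y by rewrite mulrA mulfV ?gt_eqF // mul1r.
        have : nu * z < nu * (nu^-1 * y) by rewrite ltr_pM2l.
        lra.
      * right; rewrite HRsc // Hy.
        move: hlt; rewrite HRsc ?invr_gt0 // Hy -EFinM => hlt.
        have [z Hz] := Hreal p'' (lt_trans hlt (ltry _)).
        move: hlt; rewrite Hz -EFinM !lte_fin => hlt.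
        have h4 : nu * (nu^-1 * y) = y by rewrite mulrA mulfV ?gt_eqF // mul1r.
        have : nu * z < nu * (nu^-1 * y) by rewrite ltr_pM2l.
        lra.
    by rewrite H1.
  + have nu00 : nu = 0 by lra.
    subst nu.
    have : Pi_rho P r S0 S1 rho 0 pi.
      split; first exact: Enu.
      split; first exact: hR.
      move=> p'' Hp''.
      have Ep'' : expect P (excess r S0 S1 p'') = 0%:E := Hp''.
      rewrite leNgt; apply/negP => hlt.
      apply: Hnp; exists p''; split.
      * by rewrite Ep'' Enu.
      * exact: ltW.
      * by right.
    by rewrite H0.
Qed.
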